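(* Let $X$ be a finite $T_0$ topological space, let $\mathcal V$ be a multivector field on $X$ such that $X$ is invariant, and let $\mathcal M=\{M_p\mid p\in\mathbb P\}$ be a Morse predecomposition of $X$. If among the admissible preorders on $\mathbb P$ there is a partial order, then the indexed family $\mathcal M':=\{M_{\{p\}}\mid p\in\mathbb P\}$ is a Morse decomposition of $X$.
   Context: Notation: $\operatorname{cl}$ is closure; $A\subset X$ is locally closed if $\operatorname{cl}A\setminus A$ is closed. A multivector field $\mathcal V$ on $X$ is a partition of $X$ into locally closed sets (multivectors); $[x]_{\mathcal V}$ is the multivector containing $x$. A multivector $V$ is critical if the relative singular homology $H(\operatorname{cl}V,\operatorname{cl}V\setminus V)$ is nontrivial, regular otherwise. $A$ is $\mathcal V$-compatible if it is a union of multivectors; the $\mathcal V$-hull $\langle A\rangle_{\mathcal V}$ is the smallest locally closed $\mathcal V$-compatible set containing $A$. Put $\Pi_{\mathcal V}(x)=\operatorname{cl}\{x\}\cup[x]_{\mathcal V}$. A solution is a partial map $\gamma:\mathbb Z\nrightarrow X$ whose domain is an interval of integers and $\gamma(t+1)\in\Pi_{\mathcal V}(\gamma(t))$ whenever $t,t+1\in\operatorname{dom}\gamma$; a path is a solution with finite domain; a full solution has domain $\mathbb Z$. For a full solution, $\alpha(\gamma)=\langle\bigcap_{t\in\mathbb Z,t\le0}\gamma((-\infty,t])\rangle_{\mathcal V}$ and $\omega(\gamma)=\langle\bigcap_{t\in\mathbb Z,t\ge0}\gamma([t,\infty))\rangle_{\mathcal V}$. A full solution is essential unless $\alpha(\gamma)$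 or $\omega(\gamma)$ is contained in a single regular multivector. An essential solution in $A$ is an essential full solution with image in $A$. For $S\subset X$, $\operatorname{Inv}S$ is the set of $x\in S$ such that some essential solution $\gamma$ in $S$ has $\gamma(0)=x$; $S$ is invariant if $\operatorname{Inv}S=S$. An invariant set $S$ is an isolated invariant set if there is a closed $N\supset\Pi_{\mathcal V}(S)$ such that every path in $N$ with both endpoints in $S$ has image in $S$. Links: for invariant $S_1,S_2$, a full solution $\gamma$ is a link from $S_1$ to $S_2$ if $\alpha(\gamma)\cap S_1\ne\emptyset\ne\omega(\gamma)\cap S_2$. Morse predecomposition of $X$: an indexed family $\mathcal M=\{M_p\mid p\in\mathbb P\}$ of mutually disjoint isolated invariant subsets of $X$ such that every essential solution in $X$ is a link from $M_p$ to $M_q$ for some $p,q\in\mathbb P$. A preorder $\le$ on $\mathbb P$ is admissible if the existence of a link from $M_p$ to $M_q$ implies $q\le p$. An invariant $T\subset X$ is saturated (in $X$) if every essential solution $\gamma$ in $X$ with $\alpha(\gamma)\subset T$ and $\omega(\gamma)\subset T$ has $\operatorname{im}\gamma\subset T$. A Morse decomposition of $X$ is a Morse predecomposition all of whose members are saturated and for which some admissible preorder is a partial order. For $C\subset X$ put $\mathbb P_C=\{p\in\mathbb P\mid M_p\cap C\neq\emptyset\}$. For $\mathbb Q\subset\mathbb P$, let $\operatorname{eSol}_{\mathbb Q}(X)$ be the set of essential solutions $\gamma$ in $X$ with $\mathbb P_{\alpha(\gamma)}\cap\mathbb Q\ne\emptyset\ne\mathbb P_{\omega(\gamma)}\cap\mathbb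 Q$, and $M_{\mathbb Q}:=\bigcup\{\operatorname{im}\gamma\mid\gamma\in\operatorname{eSol}_{\mathbb Q}(X)\}$. *)

(* Defs.v *)
From HB Require Import structures.
From mathcomp Require Import all_boot all_order all_algebra.
From mathcomp Require Import all_classical all_reals all_analysis.
From mathcomp Require Import Rstruct Rstruct_topology.
From Stdlib Require List.

Set Implicit Arguments.
Unset Strict Implicit.
Unset Printing Implicit Defensive.

Import Order.TTheory GRing.Theory Num.Theory.
Local Open Scope classical_set_scope.
Local Open Scope ring_scope.

Definition std_simplex (n : nat) : set 'rV[Rdefinitions.R]_(n.+1) :=
  [set t | (forall i, 0 <= t ord0 i) /\ \sum_i t ord0 i = 1].

(* The i-th coface map Delta^n -> Delta^(n+1): insert a 0 at coordinate i. *)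
Arguments std_simplex : clear implicits.
Definition coface (n : nat) (i : 'I_(n.+2)) (t : 'rV[Rdefinitions.R]_(n.+1)) : 'rV[Rdefinitions.R]_(n.+2) :=
  \row_j (match unlift i j with Some k => t ord0 k | None => 0 end).

Section Singular.
Variable T : topologicalType.

(* A (representative of a) singular n-simplex: a map R^(n+1) -> T that is
   continuous on the standard simplex; only its values on the simplex matter
   (see [sagree]). *)
Definition sing_simplex (n : nat) (s : 'rV[Rdefinitions.R]_(n.+1) -> T) : Prop :=
  {within std_simplex n, continuous s}.

Definition sagree (n : nat) (s u : 'rV[Rdefinitions.R]_(n.+1) -> T) : Prop :=
  forall t, std_simplex n t -> s t = u t.

Definition face (n : nat) (i : 'I_(n.+2)) (s : 'rV[Rdefinitions.R]_(n.+2) -> T) :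
  'rV[Rdefinitions.R]_(n.+1) -> T := fun t => s (coface i t).

(* Singular n-chains, as formal finite sums (lists of integer-weighted simplices). *)
Definition chain (n : nat) := seq (int * ('rV[Rdefinitions.R]_(n.+1) -> T))%type.

Definition coef (n : nat) (c : chain n) (u : 'rV[Rdefinitions.R]_(n.+1) -> T) : int :=
  \sum_(p <- c | `[< sagree p.2 u >]) p.1.

Definition chain_eq (n : nat) (c d : chain n) : Prop :=
  forall u, coef c u = coef d u.

Definition chain_in (A : set T) (n : nat) (c : chain n) : Prop :=
  List.Forall (fun p => sing_simplex p.2 /\ forall t, std_simplex n t -> A (p.2 t)) c.

Definition bdry (n : nat) (c : chain n.+1) : chain n :=
  flatten [seq [seq (((-1) ^+ (i : nat) * p.1)%R : int, face i p.2) | i : 'I_(n.+2) <- enum 'I_(n.+2)] | p <- c].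

Definition rel_boundary (A B : set T) (n : nat) (c : chain n) : Prop :=
  exists (d : chain n.+1) (e : chain n),
    chain_in A d /\ chain_in B e /\ chain_eq c (bdry d ++ e).

Definition rel_homology_nontrivial (A B : set T) : Prop :=
  (exists c : chain 0, chain_in A c /\ ~ rel_boundary A B c) \/
  (exists (n : nat) (c : chain n.+1), chain_in A c /\
     (exists e : chain n, chain_in B e /\ chain_eq (bdry c) e) /\
     ~ rel_boundary A B c).

Definition locally_closed (A : set T) : Prop := closed (closure A `\` A).

(* A multivector field: a partition of T into (nonempty) locally closed sets,
   given as the collection of its blocks. *)
Definition multivector_field (V : set (set T)) : Prop :=
  (forall A, V A -> A !=set0) /\
  (forall A B, V A -> V B -> A `&` B !=set0 -> A = B) /\
  (forall x, exists A, V A /\ A x) /\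
  (forall A, V A -> locally_closed A).

Definition mv (V : set (set T)) (x : T) : set T :=
  [set y | exists A, V A /\ A x /\ A y].

Definition critical (A : set T) : Prop :=
  rel_homology_nontrivial (closure A) (closure A `\` A).

Definition regular (A : set T) : Prop := ~ critical A.

Definition compatible (V : set (set T)) (A : set T) : Prop :=
  forall x, A x -> mv V x `<=` A.

Definition hull (V : set (set T)) (A : set T) : set T :=
  \bigcap_(B in [set B | locally_closed B /\ compatible V B /\ A `<=` B]) B.

Definition PiV (V : set (set T)) (x : T) : set T := closure [set x] `|` mv V x.

Definition PiV_set (V : set (set T)) (S : set T) : set T :=
  \bigcup_(x in S) PiV V x.

Definition full_solution (V : set (set T)) (g : int -> T) : Prop :=
  forall t : int, PiV V (g t) (g (t + 1)).

Definition alpha_lim (V : set (set T)) (g : int -> T) : set T :=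
  hull V (\bigcap_(t in [set t : int | t <= 0]) (g @` [set s | s <= t])).

Definition omega_lim (V : set (set T)) (g : int -> T) : set T :=
  hull V (\bigcap_(t in [set t : int | 0 <= t]) (g @` [set s | t <= s])).

Definition in_single_regular (V : set (set T)) (A : set T) : Prop :=
  exists B, V B /\ regular B /\ A `<=` B.

Definition essential (V : set (set T)) (g : int -> T) : Prop :=
  full_solution V g /\
  ~ in_single_regular V (alpha_lim V g) /\ ~ in_single_regular V (omega_lim V g).

Definition essential_in (V : set (set T)) (S : set T) (g : int -> T) : Prop :=
  essential V g /\ forall t, S (g t).

Definition Inv (V : set (set T)) (S : set T) : set T :=
  [set x | S x /\ exists g, essential_in V S g /\ g 0 = x].

Definition is_invariant (V : set (set T)) (S : set T) : Prop := Inv V S = S.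

(* paths, indexed by {0,...,n} *)
Definition path_in (V : set (set T)) (N : set T) (n : nat) (g : nat -> T) : Prop :=
  (forall i, (i < n)%N -> PiV V (g i) (g i.+1)) /\ (forall i, (i <= n)%N -> N (g i)).

Definition isolated_invariant (V : set (set T)) (S : set T) : Prop :=
  is_invariant V S /\
  exists N, closed N /\ PiV_set V S `<=` N /\
    forall n g, path_in V N n g -> S (g 0%N) -> S (g n) ->
      forall i, (i <= n)%N -> S (g i).

Definition link (V : set (set T)) (S1 S2 : set T) (g : int -> T) : Prop :=
  full_solution V g /\ alpha_lim V g `&` S1 !=set0 /\ omega_lim V g `&` S2 !=set0.

Definition morse_predecomposition (V : set (set T)) (P : Type) (M : P -> set T) : Prop :=
  (forall p q, p <> q -> M p `&` M q = set0) /\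
  (forall p, isolated_invariant V (M p)) /\
  (forall g, essential_in V [set: T] g -> exists p q, link V (M p) (M q) g).

Definition preorder_rel (P : Type) (le : P -> P -> Prop) : Prop :=
  (forall p, le p p) /\ (forall p q r, le p q -> le q r -> le p r).

Definition partial_order_rel (P : Type) (le : P -> P -> Prop) : Prop :=
  preorder_rel le /\ (forall p q, le p q -> le q p -> p = q).

Definition admissible (V : set (set T)) (P : Type) (M : P -> set T)
  (le : P -> P -> Prop) : Prop :=
  preorder_rel le /\ forall p q, (exists g, link V (M p) (M q) g) -> le q p.

Definition saturated (V : set (set T)) (S : set T) : Prop :=
  is_invariant V S /\
  forall g, essential_in V [set: T] g -> alpha_lim V g `<=` S -> omega_lim V g `<=` S ->
    forall t, S (g t).

Definition morse_decomposition (V : set (set T)) (P : Type) (M : P -> set T) : Prop :=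
  morse_predecomposition V M /\ (forall p, saturated V (M p)) /\
  exists le, admissible V M le /\ partial_order_rel le.

Definition Pindex (P : Type) (M : P -> set T) (C : set T) : set P :=
  [set p | M p `&` C !=set0].

Definition eSol (V : set (set T)) (P : Type) (M : P -> set T) (Q : set P) : set (int -> T) :=
  [set g | essential_in V [set: T] g /\
           Pindex M (alpha_lim V g) `&` Q !=set0 /\ Pindex M (omega_lim V g) `&` Q !=set0].

Definition MQ (V : set (set T)) (P : Type) (M : P -> set T) (Q : set P) : set T :=
  \bigcup_(g in eSol V M Q) range g.

End Singular.

(* Main.v *)
Require Import Defs.
From mathcomp Require Import all_boot all_order all_algebra.
From mathcomp Require Import all_classical all_reals all_analysis.
From mathcomp Require Import zify.
From Stdlib Require Import Classical.
Import Order.TTheory GRing.Theory Num.Theory.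
Local Open Scope classical_set_scope.
Local Open Scope ring_scope.

Inductive reach {X : topologicalType} (V : set (set X)) : X -> X -> Prop :=
| reach0 x : reach V x x
| reachS x y z : PiV V x y -> reach V y z -> reach V x z.

Lemma reach_trans {X : topologicalType} (V : set (set X)) x y z :
  reach V x y -> reach V y z -> reach V x z.
Proof. by elim=> // a b c h _ IH /IH; apply: reachS. Qed.

Arguments reach_trans {X V x y z}.

Lemma PiV_refl {X : topologicalType} (V : set (set X)) x : PiV V x x.
Proof. by left; apply: subset_closure. Qed.

Lemma reach1 {X : topologicalType} (V : set (set X)) x y : PiV V x y -> reach V x y.
Proof. by move=> h; apply: reachS h (reach0 _ _). Qed.

Arguments reach1 {X V x y}.

Lemma full_shift {X : topologicalType} (V : set (set X)) g k :
  full_solution V g -> full_solution V (fun u => g (u + k)).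
Proof. by move=> h t; have := h (t + k); rewrite addrAC. Qed.

Lemma full_reach {X : topologicalType} (V : set (set X)) g s (n : nat) :
  full_solution V g -> reach V (g s) (g (s + n%:Z)).
Proof.
move=> h; elim: n => [|n IH]; first by rewrite addr0; apply: reach0.
apply: reach_trans IH _; apply: reach1.
have -> : s + n.+1%:Z = s + n%:Z + 1 by lia.
exact: h.
Qed.

Lemma full_reach_le {X : topologicalType} (V : set (set X)) g s1 s2 :
  full_solution V g -> s1 <= s2 -> reach V (g s1) (g s2).
Proof.
move=> h le12; have -> : s2 = s1 + `|s2 - s1|%N%:Z.
  by lia.
exact: full_reach.
Qed.

Lemma alphaE {X : topologicalType} (g : int -> X) :
  \bigcap_(t in [set t : int | t <= 0]) (g @` [set s | s <= t]) =
  [set x | forall t, exists s, s <= t /\ g s = x].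
Proof.
apply/seteqP; split=> x /=.
  move=> h t; have [ht|ht] := lerP t 0.
    by have [s hs <-] := h t ht; exists s.
  have [s hs <-] := h 0 (lexx _); exists s; split=> //; move: hs => /= hs; lia.
by move=> h t _; have [s [hs <-]] := h t; exists s.
Qed.

Lemma omegaE {X : topologicalType} (g : int -> X) :
  \bigcap_(t in [set t : int | 0 <= t]) (g @` [set s | t <= s]) =
  [set x | forall t, exists s, t <= s /\ g s = x].
Proof.
apply/seteqP; split=> x /=.
  move=> h t; have [ht|ht] := lerP 0 t.
    by have [s hs <-] := h t ht; exists s.
  have [s hs <-] := h 0 (lexx _); exists s; split=> //; move: hs => /= hs; lia.
by move=> h t _; have [s [hs <-]] := h t; exists s.
Qed.

Lemma lower2 (a b : int) : exists m, m <= a /\ m <= b.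
Proof. by have [h|h] := lerP a b; [exists a | exists b]; split=> //; lia. Qed.

Lemma upper2 (a b : int) : exists m, a <= m /\ b <= m.
Proof. by have [h|h] := lerP a b; [exists b | exists a]; split=> //; lia. Qed.

Lemma alpha_tail {X : topologicalType} (V : set (set X)) r g c k :
  (forall u, u <= c -> r u = g (u + k)) -> alpha_lim V r = alpha_lim V g.
Proof.
move=> h; rewrite /alpha_lim !alphaE; congr hull; apply/seteqP; split=> x /= hx t.
  have [m [h1 h2]] := lower2 (t - k) c.
  have [s [hs <-]] := hx m; exists (s + k); split; first lia.
  by rewrite h //; lia.
have [m [h1 h2]] := lower2 t c.
have [s [hs <-]] := hx (m + k); exists (s - k); split; first lia.
by rewrite h ?subrK //; lia.
Qed.

Lemma omega_tail {X : topologicalType} (V : set (set X)) r g c k :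
  (forall u, c <= u -> r u = g (u + k)) -> omega_lim V r = omega_lim V g.
Proof.
move=> h; rewrite /omega_lim !omegaE; congr hull; apply/seteqP; split=> x /= hx t.
  have [m [h1 h2]] := upper2 (t - k) c.
  have [s [hs <-]] := hx m; exists (s + k); split; first lia.
  by rewrite h //; lia.
have [m [h1 h2]] := upper2 t c.
have [s [hs <-]] := hx (m + k); exists (s - k); split; first lia.
by rewrite h ?subrK //; lia.
Qed.

Lemma glue {X : topologicalType} (V : set (set X)) x y : reach V x y ->
  forall g t d s, full_solution V g -> full_solution V d -> g t = x -> d s = y ->
  exists r m, full_solution V r /\ 0 <= m /\ (forall u, u <= 0 -> r u = g (u + t)) /\
    (forall u, m <= u -> r u = d (u + (s - m))).
Proof.
elim=> {x y} [x|x y' z hxy _ IH] g t d s fg fd gx dy.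
  exists (fun u => if u <= 0 then g (u + t) else d (u + s)), 0; split; last split.
  - move=> u /=; have [h1|h1] := lerP (u + 1) 0.
      have -> : (u <= 0) = true by apply/idP; lia.
      by rewrite addrAC; apply: fg.
    have [h2|h2] := lerP u 0.
      have -> : u = 0 by lia.
      rewrite add0r gx -dy addrC; exact: fd.
    by rewrite addrAC; apply: fd.
  - exact: lexx.
  split; first by move=> u ->.
  move=> u hu; rewrite subr0; have [h3|h3] := lerP u 0; last done.
  have -> : u = 0 by lia.
  by rewrite !add0r gx dy.

pose g' := fun u => if u <= 0 then g (u + t) else y'.
have fg' : full_solution V g'.
  move=> u; rewrite /g'; have [h1|h1] := lerP (u + 1) 0.
    have -> : (u <= 0) = true by apply/idP; lia.
    by rewrite addrAC; apply: fg.
  have [h2|h2] := lerP u 0.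
    have -> : u = 0 by lia.
    by rewrite add0r gx.
  exact: PiV_refl.
have [r [m [fr [m0 [h1 h2]]]]] := IH g' 1 d s fg' fd erefl dy.
exists (fun u => r (u + -1)), (m + 1); split; first exact: full_shift.
split; first lia.
split.
  move=> u hu; rewrite h1; last lia.
  by rewrite /g' -addrA addNr addr0 hu.
move=> u hu; rewrite h2; last lia.
by congr d; lia.
Qed.

Arguments glue {X V x y}.
Arguments alpha_tail {X V r g c k}.
Arguments omega_tail {X V r g c k}.

Lemma glue2 {X : topologicalType} {V : set (set X)} {g t d s y} :
  full_solution V g -> full_solution V d -> reach V (g t) y -> reach V y (d s) ->
  exists r, [/\ full_solution V r, alpha_lim V r = alpha_lim V g,
    omega_lim V r = omega_lim V d & r 0 = y].
Proof.
move=> fg fd h1 h2.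
have fc : full_solution V (fun _ : int => y) by move=> u; exact: PiV_refl.
have [r1 [m1 [fr1 [m10 [e1 e2]]]]] := glue h1 g t _ 0 fg fc erefl erefl.
have r1m : r1 m1 = y by rewrite e2.
have [r [m [fr [m0 [e3 e4]]]]] := glue h2 r1 m1 d s fr1 fd r1m erefl.
exists r; split=> //.
- by rewrite (alpha_tail e3) (alpha_tail e1).
- exact: omega_tail e4.
- by rewrite e3 // add0r.
Qed.

Lemma nbhs_avoid {X : topologicalType} (C : set X) (y : X) (s : seq X) :
  (forall x, x \in s -> C x -> ~ closure [set x] y) ->
  exists B, nbhs y B /\ forall x, x \in s -> C x -> ~ B x.
Proof.
elim: s => [|a s IH] h.
  by exists setT; split=> //; apply: filterT.
have [B1 [nB1 hB1]] : exists B, nbhs y B /\ forall x, x \in s -> C x -> ~ B x.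
  by apply: IH => x xs; apply: h; rewrite inE xs orbT.
have [B0 [nB0 hB0]] : exists B, nbhs y B /\ (C a -> ~ B a).
  have [Ca|nCa] := classic (C a); last first.
    by exists setT; split=> //; apply: filterT.
  have [B HB] := not_all_ex_not _ _ (h a (mem_head _ _) Ca).
  have [nB hB] := imply_to_and _ _ HB.
  exists B; split=> // _ Ba; apply: hB; by exists a.
exists (B0 `&` B1); split; first exact: filterI.
move=> x; rewrite inE => /orP [/eqP ->|xs] Cx [b0 b1].
  exact: hB0 Cx b0.
exact: hB1 xs Cx b1.
Qed.

Lemma fin_all {X : topologicalType} : finite_set [set: X] ->
  exists s : seq X, forall x, x \in s.
Proof.
move/finite_fsetP => [S eS]; exists (finmap.enum_fset S) => x.
have : [set: X] x by []. 
by rewrite eS.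
Qed.

Lemma downclosed_closed {X : topologicalType} (C : set X) : finite_set [set: X] ->
  (forall x y, C x -> closure [set x] y -> C y) -> closed C.
Proof.
move=> /fin_all [s hs] dc y cy; apply: contrapT => ncy.
have [B [nB hB]] := @nbhs_avoid _ C y s (fun x _ Cx cl => ncy (dc x y Cx cl)).
by have [z [Cz Bz]] := cy B nB; apply: (hB z (hs z) Cz).
Qed.

Lemma time_avoid {X : topologicalType} (g : int -> X) (s : seq X) :
  (forall x, x \in s -> exists t, forall u, u <= t -> g u <> x) ->
  exists t, forall u, u <= t -> g u \notin s.
Proof.
elim: s => [|a s IH] h; first by exists 0.
have [t1 h1] : exists t, forall u, u <= t -> g u \notin s.
  by apply: IH => x xs; apply: h; rewrite inE xs orbT.
have [t0 h0] := h a (mem_head _ _).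
have [m [m1 m2]] := lower2 t0 t1.
exists m => u hu; rewrite inE negb_or; apply/andP; split.
  by apply/eqP; apply: h0; lia.
by apply: h1; lia.
Qed.

Lemma limA_nonempty {X : topologicalType} : finite_set [set: X] ->
  forall g : int -> X, exists y, forall t, exists s, s <= t /\ g s = y.
Proof.
move=> /fin_all [s hs] g; apply: contrapT => H.
have H' : forall x, x \in s -> exists t, forall u, u <= t -> g u <> x.
  move=> x _.
  have Hx : ~ (forall t : int, exists s, s <= t /\ g s = x) by move=> hx; apply: H; exists x.
  have [t Ht] := not_all_ex_not _ _ Hx.
  by exists t => u hu gu; apply: Ht; exists u; split.
have [t ht] := time_avoid g s H'.
by have := ht t (lexx _); rewrite hs.
Qed.

Lemma mv_sym {X : topologicalType} (V : set (set X)) x y : mv V x y -> mv V y x.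
Proof. by move=> [B [VB [Bx By]]]; exists B. Qed.

Lemma reach_alpha {X : topologicalType} (V : set (set X)) r z :
  finite_set [set: X] -> full_solution V r -> alpha_lim V r z ->
  exists s, reach V z (r s).
Proof.
move=> fin fr; rewrite /alpha_lim alphaE => hz.
pose A := [set x | exists s, reach V x (r s)].
apply: (hz A); split; last split.
- rewrite /locally_closed setDE; apply: closedI; first exact: closed_closure.
  apply: downclosed_closed => // x y nAx cl [s hs]; apply: nAx.
  by exists s; apply: reachS hs; left.
- move=> x [s hs] y hy; exists s; apply: reachS hs; right; exact: mv_sym.
- move=> y /= hy; have [s [_ <-]] := hy 0; exists s; exact: reach0.
Qed.

Lemma reach_omega {X : topologicalType} (V : set (set X)) r w :
  finite_set [set: X] -> full_solution V r -> omega_lim V r w ->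
  forall t, exists s, t <= s /\ reach V (r s) w.
Proof.
move=> fin fr; rewrite /omega_lim omegaE => hw.
pose B := [set x | forall t, exists s, t <= s /\ reach V (r s) x].
apply: (hw B); split; last split.
- have cB : closed B.
    apply: downclosed_closed => // x y Bx cl t; have [s [hs hr]] := Bx t.
    by exists s; split=> //; apply: reach_trans hr (reach1 _); left.
  rewrite /locally_closed; have -> : closure B `\` B = set0.
    by apply/seteqP; split=> x // [h1 h2]; apply: h2; apply: cB.
  exact: closed0.
- move=> x Bx y hy t; have [s [hs hr]] := Bx t.
  by exists s; split=> //; apply: reach_trans hr (reach1 _); right.
- move=> y /= hy t; have [s [hs <-]] := hy t; exists s; split=> //; exact: reach0.
Qed.

Lemma limO_nonempty {X : topologicalType} : finite_set [set: X] ->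
  forall g : int -> X, exists y, forall t, exists s, t <= s /\ g s = y.
Proof.
move=> fin g; have [y hy] := limA_nonempty fin (fun u => g (- u)).
exists y => t; have [s [hs <-]] := hy (- t); exists (- s); split; first lia.
done.
Qed.

Lemma hull_sub {X : topologicalType} (V : set (set X)) A : A `<=` hull V A.
Proof. by move=> x Ax B [_ [_ AB]]; apply: AB. Qed.

Section Main.
Local Notation full := full_solution.

Lemma eSol1 {X : topologicalType} (V : set (set X)) P (M : P -> set X) p g :
  eSol V M [set p] g <-> [/\ essential_in V [set: X] g,
     M p `&` alpha_lim V g !=set0 & M p `&` omega_lim V g !=set0].
Proof.
split.
  move=> [e [[q [hq qp]] [q' [hq' q'p]]]].
  rewrite /= in qp q'p; subst q q'; split=> //.
by move=> [e ha ho]; split=> //; split; exists p.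
Qed.

Lemma MQ_range {X : topologicalType} (V : set (set X)) P (M : P -> set X) Q g :
  eSol V M Q g -> forall t, MQ V M Q (g t).
Proof. by move=> eg t; exists g => //; exists t. Qed.

Lemma MQ_inv {X : topologicalType} (V : set (set X)) P (M : P -> set X) Q x :
  MQ V M Q x -> exists g t, eSol V M Q g /\ g t = x.
Proof. by move=> [g eg [t _ <-]]; exists g, t. Qed.

Lemma glue_eSol {X : topologicalType} (V : set (set X)) P (M : P -> set X) p g t d s y :
  eSol V M [set p] g -> eSol V M [set p] d -> reach V (g t) y -> reach V y (d s) ->
  exists r, eSol V M [set p] r /\ r 0 = y.
Proof.
move=> /eSol1 [[[fg [ag og]] _] ga go] /eSol1 [[[fd [ad od]] _] da do'] h1 h2.
have [r [fr ar or r0]] := glue2 fg fd h1 h2.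
exists r; split=> //; apply/eSol1; split.
- by split=> //; split=> //; rewrite ar or.
- by rewrite ar.
- by rewrite or.
Qed.

Lemma key {X : topologicalType} (V : set (set X)) P (M : P -> set X) le p q z w :
  admissible V M le -> MQ V M [set p] z -> MQ V M [set q] w -> reach V z w -> le q p.
Proof.
move=> [_ adm] /MQ_inv [g [t [/eSol1 [[[fg _] _] ga _] gt]]]
  /MQ_inv [d [s [/eSol1 [[[fd _] _] _ do'] ds]]] hzw.
have h1 : reach V (g t) z by rewrite gt; exact: reach0.
have h2 : reach V z (d s) by rewrite ds.
have [r [fr ar or _]] := glue2 fg fd h1 h2.
apply: adm; exists r; split=> //; split.
  by rewrite ar setIC.
by rewrite or setIC.
Qed.

Lemma M_sub {X : topologicalType} (V : set (set X)) P (M : P -> set X) a :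
  finite_set [set: X] -> is_invariant V (M a) -> M a `<=` MQ V M [set a].
Proof.
move=> fin inv x Max.
have : Defs.Inv V (M a) x by rewrite inv.
move=> [_ [g [[eg gin] g0]]]; rewrite -g0; apply: MQ_range; apply/eSol1; split.
- by split.
- have [y hy] := limA_nonempty fin g; exists y; split.
    by have [s [_ <-]] := hy 0; apply: gin.
  by rewrite /alpha_lim alphaE; apply: hull_sub.
- have [y hy] := limO_nonempty fin g; exists y; split.
    by have [s [_ <-]] := hy 0; apply: gin.
  by rewrite /omega_lim omegaE; apply: hull_sub.
Qed.

End Main.

Lemma path_reach {X : topologicalType} (V : set (set X)) N n g :
  path_in V N n g -> forall j k, (j <= k <= n)%N -> reach V (g j) (g k).
Proof.
move=> [hs _] j k /andP [jk kn].
have -> : k = (j + (k - j))%N by rewrite subnKC.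
have : (j + (k - j) <= n)%N by rewrite subnKC.
elim: (k - j)%N => [|m IH] h; first by rewrite addn0; exact: reach0.
apply: (reach_trans (IH _)); first lia.
rewrite addnS; apply: reach1; apply: hs; lia.
Qed.

Arguments key {X V P M le p q z w}.
Arguments glue_eSol {X V P M p g t d s y}.
Arguments MQ_inv {X V P M Q x}.
Arguments MQ_range {X V P M Q g}.
Arguments reach_alpha {X V r z}.
Arguments reach_omega {X V r w}.
Arguments full_reach_le {X V g s1 s2}.
Arguments path_reach {X V N n g}.

Theorem corollary4p15 (X : topologicalType) (V : set (set X)) (P : Type) (M : P -> set X) :
  finite_set [set: X] -> kolmogorov_space X ->
  multivector_field V ->
  is_invariant V [set: X] ->
  morse_predecomposition V M ->
  (exists le : P -> P -> Prop, admissible V M le /\ partial_order_rel le) ->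
  morse_decomposition V (fun p : P => MQ V M [set p]).
Proof.
move=> fin _ _ _ [disj [iso links]] [le [adm po]].
have [_ antisym] := po.
have disj' : forall p q x, MQ V M [set p] x -> MQ V M [set q] x -> p = q.
  move=> p q x hp hq; apply: antisym.
    exact: (key adm hq hp (reach0 _ _)).
  exact: (key adm hp hq (reach0 _ _)).
have inv' : forall p, is_invariant V (MQ V M [set p]).
  move=> p; apply/seteqP; split=> x; first by move=> [].
  move=> hx; split=> //.
  have [g [t [eg gt]]] := MQ_inv hx.
  have h1 : reach V (g t) x by rewrite gt; exact: reach0.
  have h1' : reach V x (g t) by rewrite gt; exact: reach0.
  have [r [er r0]] := glue_eSol eg eg h1 h1'.
  exists r; split=> //; split; last exact: MQ_range er.
  by have /eSol1 [[]] := er.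
have Msub : forall a, M a `<=` MQ V M [set a].
  by move=> a; apply: M_sub => //; have [] := iso a.
split; [split; [|split]|split].
- move=> p q pq; apply/seteqP; split=> x // [hp hq]; apply: pq; exact: disj' hp hq.
- move=> p; split; first exact: inv'.
  exists setT; split; first exact: closedT.
  split=> // n g hpath h0 hn i hi.
  have [d [s [ed ds]]] := MQ_inv hn.
  have [c [t [ec ct]]] := MQ_inv h0.
  have h1 : reach V (c t) (g i) by rewrite ct; apply: (path_reach hpath); rewrite hi.
  have h2 : reach V (g i) (d s) by rewrite ds; apply: (path_reach hpath); rewrite hi leqnn.
  have [r [er r0]] := glue_eSol ec ed h1 h2.
  by rewrite /= -r0; apply: (MQ_range er 0).
- move=> g eg; have [a [b [fg [[z [az Maz]] [w [bw Mbw]]]]]] := links g eg.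
  exists a, b; split=> //; split; first by exists z; split=> //; apply: Msub.
  by exists w; split=> //; apply: Msub.
- move=> p; split; first exact: inv'.
  move=> g eg ha ho t.
  have [a [b [fg [[z [az Maz]] [w [bw Mbw]]]]]] := links g eg.
  have ap : a = p by apply: (disj' _ _ z); [apply: Msub | apply: ha].
  have bp : b = p by apply: (disj' _ _ w); [apply: Msub | apply: ho].
  subst a b; apply: MQ_range; apply/eSol1; split=> //.
    by exists z.
  by exists w.
- exists le; split=> //; split; first by have [] := adm.
  move=> p q [r [fr [[z [az hz]] [w [ow hw]]]]].
  have [s1 h1] := reach_alpha fin fr az.
  have [s2 [le12 h2]] := reach_omega fin fr ow s1.
  apply: (key adm hz hw).
  apply: (reach_trans h1); apply: (reach_trans _ h2); exact: full_reach_le.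
Qed.
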